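(* Let $X$ be a real vector space and let $K\subseteq X$ be a nontrivial convex cone having a convex and relatively solid base $B$. Then $K^{ss}:=\{l\in X':\ \inf_{b\in B}l(b)>0\}$ is nonempty.
   Context: $X'$ is the algebraic dual of $X$. $K$ nontrivial means $K\ne\{0\}$, $K\ne X$. A base of $K$ is a set $B$ with $0\notin B$ such that each $k\in K\setminus\{0\}$ has a unique representation $k=tb$ with $t>0$, $b\in B$. $B$ is relatively solid if $icr(B)\neq\emptyset$, where $icr(B):=\{x\in B:\ \forall x'\in span(B-B)\ \exists \lambda'>0 \text{ with } x+\lambda x'\in B\ \forall\lambda\in[0,\lambda']\}$. *)

(* Defs.v *)
From HB Require Import structures.
From mathcomp Require Import all_boot all_order all_algebra.
From mathcomp Require Import all_classical all_reals.
From mathcomp Require Import ereal.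
Set Implicit Arguments. Unset Strict Implicit. Unset Printing Implicit Defensive.
Import Order.TTheory GRing.Theory Num.Theory.
Local Open Scope classical_set_scope.
Local Open Scope ring_scope.

Section Defs.
Variables (R : realType) (X : lmodType R).

Definition convex_set (A : set X) : Prop :=
  forall x y t, A x -> A y -> 0 <= t -> t <= 1 -> A (t *: x + (1 - t) *: y).

Definition is_cone (K : set X) : Prop :=
  K 0 /\ forall t x, 0 <= t -> K x -> K (t *: x).

Definition convex_cone (K : set X) : Prop := is_cone K /\ convex_set K.

Definition nontrivial (K : set X) : Prop := K <> [set 0] /\ K <> setT.

Definition is_base (K B : set X) : Prop :=
  B `<=` K /\ ~ B 0 /\
  forall k, K k -> k <> 0 ->
    exists t b, [/\ 0 < t, B b, k = t *: b &
      forall t' b', 0 < t' -> B b' -> k = t' *: b' -> t' = t /\ b' = b].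

Definition set_diff (B : set X) : set X := [set x - y | x in B & y in B].

Definition lspan (A : set X) : set X :=
  [set v | exists n (c : 'I_n -> R) (w : 'I_n -> X),
     (forall i, A (w i)) /\ v = \sum_(i < n) c i *: w i].

Definition icr (B : set X) : set X :=
  [set x | B x /\ forall x', lspan (set_diff B) x' ->
     exists l', 0 < l' /\ forall l, 0 <= l -> l <= l' -> B (x + l *: x')].

Definition relatively_solid (B : set X) : Prop := icr B !=set0.

(* strictly positive dual cone K^ss w.r.t. the base B, inside the algebraic dual *)
Definition Kss (B : set X) : set {linear X -> R^o} :=
  [set l | (0 < ereal_inf [set (l b)%:E | b in B])%E].

End Defs.

(* Main.v *)
Require Import Defs.
From HB Require Import structures.
From mathcomp Require Import all_boot all_order all_algebra.
From mathcomp Require Import all_classical all_reals ereal.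
Import Order.TTheory GRing.Theory Num.Theory.
Local Open Scope classical_set_scope.
Local Open Scope ring_scope.

Section Aux.
Variables (R : realType) (X : lmodType R).
Definition subsp (S : set X) := forall a x y, S x -> S y -> S (a *: x + y).

Lemma lspan0 (A : set X) : lspan A 0.
Proof. by exists 0%N, (fun=> 0), (fun=> 0); split => [[]|]; rewrite ?big_ord0. Qed.

Lemma lspan1 (A : set X) x : A x -> lspan A x.
Proof.
move=> Ax; exists 1%N, (fun=> 1), (fun=> x); split => //.
by rewrite big_ord1 scale1r.
Qed.

Lemma lspan_subsp (A : set X) : subsp (lspan A).
Proof.
move=> a x y [n [c [w [Aw ->]]]] [m [d [v [Av ->]]]].
exists (n + m)%N.
exists (fun i => match fintype.split i with inl j => a * c j | inr k => d k end).
exists (fun i => match fintype.split i with inl j => w j | inr k => v k end).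
split; first by move=> i; case: fintype.split.
rewrite big_split_ord /= scaler_sumr; congr (_ + _); apply: eq_bigr => i _.
  by rewrite (unsplitK (inl i)) scalerA.
by rewrite (unsplitK (inr i)).
Qed.

Lemma max_compl (L : set X) (b0 : X) : subsp L -> L 0 -> ~ L b0 ->
  exists M : set X, [/\ subsp M, L `<=` M, M 0, ~ M b0 &
     forall x, exists t, M (x - t *: b0)].
Proof.
move=> sL L0 Lb0.
pose P (A : set X) := subsp (A `|` L) /\ ~ (A `|` L) b0.
have [A [[sA nAb] maxA]] : exists A, P A /\ forall B, A `<` B -> ~ P B.
  apply: Zorn_bigcup => F FP Ftot.
  have lift A z : F A -> (A `|` L) z -> ((\bigcup_(Y in F) Y) `|` L) z.
    by move=> FA [Az|Lz]; [left; exists A|right].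
  split.
  - move=> a x y [[A1 FA1 A1x]|Lx] [[A2 FA2 A2y]|Ly].
    + have [A12|A21] := Ftot _ _ FA1 FA2.
        by apply: (lift A2) => //; apply: (FP _ FA2).1; left => //; apply: A12.
      by apply: (lift A1) => //; apply: (FP _ FA1).1; left => //; apply: A21.
    + by apply: (lift A1) => //; apply: (FP _ FA1).1; [left|right].
    + by apply: (lift A2) => //; apply: (FP _ FA2).1; [right|left].
    + by right; apply: sL.
  - by move=> [[A1 FA1 A1b]|Lb]; [apply: (FP _ FA1).2; left|].
set M := A `|` L.
have M0 : M 0 by right.
exists M; split => //; first by move=> z Lz; right.
move=> x; apply: contrapT => /forallNP nx.
pose A' := [set z | exists m t, M m /\ z = m + t *: x].
have toA' z : (A' `|` L) z -> A' z.
  by case=> // Lz; exists z, 0; split; [right|rewrite scale0r addr0].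
apply: (maxA A'); first split.
- by move=> z Az; exists z, 0; split; [left|rewrite scale0r addr0].
- move=> /(_ x) h; apply: (nx 0); rewrite scale0r subr0; left; apply: h.
  by exists 0, 1; split => //; rewrite add0r scale1r.
split.
- move=> a z1 z2 /toA' [m1 [t1 [Mm1 ->]]] /toA' [m2 [t2 [Mm2 ->]]]; left.
  exists (a *: m1 + m2), (a * t1 + t2); split; first exact: sA.
  by rewrite scalerDr scalerDl scalerA addrACA.
- move=> /toA' [m [t [Mm eb]]].
  have [t0|tn0] := eqVneq t 0.
    by apply: nAb; move: eb; rewrite t0 scale0r addr0 => ->.
  apply: (nx t^-1).
  have -> : x - t^-1 *: b0 = (- t^-1) *: m + 0.
    rewrite eb scalerDr scalerA mulVf // scale1r opprD addrCA subrr addr0 addr0.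
    by rewrite scaleNr.
  exact: sA.
Qed.

Lemma uniqM (M : set X) b0 x s t : subsp M -> M 0 -> ~ M b0 ->
  M (x - s *: b0) -> M (x - t *: b0) -> s = t.
Proof.
move=> sM M0 nb Ms Mt; have [//|st] := eqVneq s t; exfalso; apply: nb.
have h : M ((t - s) *: b0).
  have -> : (t - s) *: b0 = (-1) *: (x - t *: b0) + (x - s *: b0).
    by rewrite scaleN1r opprB scalerBl addrA subrK.
  exact: sM.
have -> : b0 = (t - s)^-1 *: ((t - s) *: b0) + 0.
  by rewrite addr0 scalerA mulVf ?scale1r // subr_eq0 eq_sym.
exact: sM.
Qed.

Lemma mk_fun (M : set X) b0 : subsp M -> M 0 -> ~ M b0 ->
  (forall x, exists t, M (x - t *: b0)) ->
  exists f : {linear X -> R^o}, forall x, M (x - f x *: b0).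
Proof.
move=> sM M0 nb ex.
pose g : X -> R := fun x => xget 0 [set t | M (x - t *: b0)].
have gP x : M (x - g x *: b0) by exact: (@xgetPex _ 0 [set t | M (x - t *: b0)] (ex x)).
have uniq x s t : M (x - s *: b0) -> M (x - t *: b0) -> s = t.
  exact: uniqM.
have lin : linear (g : X -> R^o).
  move=> a x y; apply/esym/(uniq (a *: x + y)); last exact: gP.
  have -> : a *: x + y - (a * g x + g y) *: b0
      = a *: (x - g x *: b0) + (y - g y *: b0).
    by rewrite scalerBr scalerA scalerDl opprD addrACA.
  exact: sM.
exists (HB.pack_for {linear X -> R^o} g (GRing.isLinear.Build R X R^o *:%R g lin)).
exact: gP.
Qed.
End Aux.

Theorem lemma4p15 (R : realType) (X : lmodType R) (K B : set X) :
  convex_cone K -> nontrivial K ->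
  is_base K B -> convex_set B -> relatively_solid B ->
  Kss B !=set0.
Proof.
move=> _ _ [BK [nB0 bas]] _ [b0 [Bb0 icrb0]].
set L := lspan (set_diff B).
have Lb0 : ~ L b0.
  move=> Lb.
  have LN : L (- b0).
    case: Lb => n [c [w [Aw e]]]; exists n, (fun i => - c i), w; split => //.
    by rewrite e -sumrN; apply: eq_bigr => i _; rewrite scaleNr.
  have [l' [l'0 h]] := icrb0 _ LN.
  pose l := Num.min l' (1 / 2 : R).
  have l0 : 0 < l by rewrite lt_min l'0 /= divr_gt0.
  have lh : l <= 1 / 2 by rewrite ge_min lexx orbT.
  have l1 : 0 < 1 - l.
    by rewrite subr_gt0 (le_lt_trans lh) // ltr_pdivrMr // mul1r ltr1n.
  have Bc := h l (ltW l0) (ltac:(by rewrite ge_min lexx)).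
  have b0n0 : b0 <> 0 by move=> e; apply: nB0; rewrite -e.
  have [t [b [tp Bb e uq]]] := bas b0 (BK _ Bb0) b0n0.
  have [t1 _] := uq 1 b0 ltr01 Bb0 (esym (scale1r b0)).
  have ec : b0 + l *: - b0 = (1 - l) *: b0 by rewrite scalerBl scale1r scalerN.
  have eb : b0 = (1 - l)^-1 *: (b0 + l *: - b0).
    by rewrite ec scalerA mulVf ?scale1r // gt_eqF.
  have [t2 _] := uq (1 - l)^-1 _ (ltac:(by rewrite invr_gt0)) Bc eb.
  move: t2; rewrite -t1 => /(congr1 GRing.inv); rewrite invrK invr1 => /eqP.
  by rewrite subr_eq addrC -subr_eq subrr eq_sym (gt_eqF l0).
have [M [sM LM M0 nMb ex]] := @max_compl R X L b0 (@lspan_subsp R X _) (@lspan0 R X _) Lb0.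
have [f fP] := @mk_fun R X M b0 sM M0 nMb ex.
exists f; rewrite /Kss /=.
apply: (@lt_le_trans _ _ 1%:E); first by rewrite lte_fin ltr01.
apply/ereal_infP => _ [b Bb <-]; rewrite lee_fin.
have Mb : M (b - 1 *: b0).
  by rewrite scale1r; apply: LM; apply: (@lspan1 R X); exists b => //; exists b0.
by rewrite (@uniqM R X M b0 _ _ _ sM M0 nMb (fP b) Mb).
Qed.
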